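(* Let $G=(V,E)$ be a finite, undirected, unweighted, connected graph with $n=|V|$ vertices. If $P$ is a shortest walk in $G$ visiting every vertex at least once, then $n\le \mathrm{len}(P)\le 0.5n^2+0.5n$. If $C$ is a shortest closed walk in $G$ visiting every vertex at least once, then $n\le\mathrm{len}(C)\le 0.5n^2+1.5n-1$.
   Context: A walk in $G$ is a sequence $(u_1,\dots,u_h)$ of vertices with $\{u_t,u_{t+1}\}\in E$ for all $t$ (repetitions allowed), and its length is $\mathrm{len}(u_1,\dots,u_h)=h$, the number of entries counted with multiplicity. A closed walk is a walk with $u_1=u_h$. A shortest walk (resp. closed walk) visiting every vertex is one of minimum length among all walks (resp. closed walks) whose set of entries is $V$. *)

(* Defs.v *)
(* A finite simple undirected graph on the vertex type T
   is an irreflexive symmetric relation e : rel T. *)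
From mathcomp Require Import all_boot.
Set Implicit Arguments. Unset Strict Implicit. Unset Printing Implicit Defensive.

(* A walk (u_1,...,u_h) is represented as the nonempty sequence x :: s
   with x = u_1; it is a walk iff path e x s. *)
Definition walk_seq (T : eqType) (x : T) (s : seq T) : seq T := x :: s.

Definition len (T : eqType) (x : T) (s : seq T) : nat := size (walk_seq x s).

Definition is_walk (T : eqType) (e : rel T) (x : T) (s : seq T) : Prop :=
  path e x s.

Definition is_closed_walk (T : eqType) (e : rel T) (x : T) (s : seq T) : Prop :=
  path e x s /\ last x s = x.

Definition visits_all (T : finType) (x : T) (s : seq T) : Prop :=
  forall v : T, v \in walk_seq x s.

Definition shortest_covering_walk (T : finType) (e : rel T) (x : T) (s : seq T) : Prop :=
  is_walk e x s /\ visits_all x s /\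
  forall (y : T) (t : seq T), is_walk e y t -> visits_all y t -> len x s <= len y t.

Definition shortest_covering_closed_walk (T : finType) (e : rel T) (x : T) (s : seq T) : Prop :=
  is_closed_walk e x s /\ visits_all x s /\
  forall (y : T) (t : seq T), is_closed_walk e y t -> visits_all y t -> len x s <= len y t.

Definition connected_graph (T : finType) (e : rel T) : Prop :=
  forall x y : T, connect e x y.

(* Main.v *)
Require Import Defs.
From mathcomp Require Import all_boot.
From mathcomp Require Import zify.

Section Aux.
Variables (T : finType) (e : rel T).

Lemma upath (x y : T) : connect e x y ->
  exists p, [/\ path e x p, last x p = y & uniq (x :: p)].
Proof.
case/connectP => p pp ->. case: (shortenP pp) => p' pp' u _. by exists p'.
Qed.

Lemma uniq_card (s : seq T) : uniq s -> size s <= #|T|.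
Proof.
move=> u; rewrite cardE; apply: uniq_leq_size => // v _; by rewrite mem_enum.
Qed.

Lemma step (A : {set T}) (x v : T) : connected_graph e -> x \in A -> v \notin A ->
  exists p, [/\ path e x p, last x p \notin A & size p <= #|A|].
Proof.
move=> conn xA vA.
have [p [pp lp up]] := upath x v (conn x v).
set a := [pred y | y \notin A].
have hp : has a p.
  apply/hasP; exists v => //.
  have : last x p \in x :: p by apply: mem_last.
  rewrite lp inE => /orP [/eqP vx|//]; by rewrite vx xA in vA.
have kp : find a p < size p by rewrite -has_find.
exists (take (find a p).+1 p); split.
- exact: take_path.
- rewrite (take_nth x kp) last_rcons. exact: (nth_find x hp).
- rewrite size_takel //.
  have u2 : uniq (x :: take (find a p) p).
    move: up; rewrite -{1}(cat_take_drop (find a p) p) -cat_cons cat_uniq.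
    by case/andP.
  have : size (x :: take (find a p) p) <= size (enum A).
    apply: uniq_leq_size => // y; rewrite inE mem_enum => /orP [/eqP -> //|].
    move=> /(nthP x) [i]; rewrite size_take kp => hi <-; rewrite nth_take //.
    have := before_find x hi; rewrite /a /= => /negbFE; done.
  by rewrite -cardE /= size_take kp.
Qed.

Lemma cover : connected_graph e -> forall m (A : {set T}) x, #|~: A| = m -> x \in A ->
  exists t, [/\ path e x t, (forall v, v \notin A -> v \in x :: t) &
    2 * size t + #|A| * (#|A|).-1 <= #|T| * (#|T|).-1].
Proof.
move=> conn; elim=> [|m IH] A x hm xA.
- exists [::]; split => //.
  + move=> v vA; move/eqP: hm; rewrite cards_eq0 => /eqP hA.
    have : v \in ~: A by rewrite inE.
    by rewrite hA inE.
  + have -> : #|A| = #|T|.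
      have := cardsC A; rewrite hm addn0 => ->; done.
    by rewrite muln0 add0n.
- have [v vA] : exists v, v \notin A.
    have : 0 < #|~: A| by rewrite hm.
    case/card_gt0P => v; rewrite inE => ?; by exists v.
  have [p [pp lA sp]] := step A x v conn xA vA.
  set y := last x p in lA.
  have hm' : #|~: (y |: A)| = m.
    have := cardsC (y |: A); rewrite cardsU1 lA.
    have := cardsC A; rewrite hm. lia.
  have [t [pt ct bt]] := IH (y |: A) y hm' (setU11 y A).
  exists (p ++ t); split.
  + by rewrite cat_path pp.
  + move=> w wA. have := mem_last x p; rewrite -/y => yin.
    case: (w =P y) => [->|ny].
    * by rewrite -cat_cons mem_cat yin.
    * have : w \in y :: t by apply: ct; rewrite !inE negb_or wA andbT; apply/eqP.
      rewrite inE (negbTE (introN eqP ny)) /= => wt.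
      by rewrite -cat_cons mem_cat wt orbT.
  + move: bt; rewrite cardsU1 lA size_cat /=.
    have : 0 < #|A| by apply/card_gt0P; exists x.
    move: sp; case: #|A| => [|a] //= sp _ bt. nia.
Qed.

End Aux.
Arguments upath {T e x y}.
Arguments step {T e A x v}.
Arguments cover {T e}.
Arguments uniq_card {T s}.

Theorem lemma3 (T : finType) (e : rel T)
  (e_sym : symmetric e) (e_irr : irreflexive e) (e_conn : connected_graph e) :
  (forall (x : T) (s : seq T), shortest_covering_walk e x s ->
     #|T| <= len x s /\ 2 * len x s <= #|T| ^ 2 + #|T|) /\
  (forall (x : T) (s : seq T), shortest_covering_closed_walk e x s ->
     #|T| <= len x s /\ 2 * len x s + 2 <= #|T| ^ 2 + 3 * #|T|).
Proof.
have lower : forall (x : T) s, visits_all x s -> #|T| <= len x s.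
  move=> x s va; rewrite /len.
  apply: leq_trans (card_size _).
  by apply: subset_leq_card; apply/subsetP => v _; apply: va.
have cov : forall x : T, exists t, path e x t /\ visits_all x t /\
     2 * size t <= #|T| * (#|T|).-1.
  move=> x.
  have [t [pt ct bt]] := cover e_conn _ _ _ (erefl _) (set11 x).
  exists t; split => //; split.
  - move=> v; case: (v =P x) => [->|nx]; first by rewrite /walk_seq mem_head.
    by apply: ct; rewrite inE; apply/eqP.
  - move: bt; rewrite cards1 /=; lia.
have pos : forall x : T, 0 < #|T| by move=> x; apply/card_gt0P; exists x.
split.
- move=> x s [ws [va mn]]; split; first exact: lower.
  have [t [pt [vt bt]]] := cov x.
  have := mn x t pt vt; rewrite /len /walk_seq /=.
  have := pos x; case: #|T| bt => [|n] //= bt _ h. nia.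
- move=> x s [ws [va mn]]; split; first exact: lower.
  have [t [pt [vt bt]]] := cov x.
  have [q [pq lq uq]] := upath (e_conn (last x t) x).
  have hq := uniq_card uq.
  have := mn x (t ++ q); rewrite /is_closed_walk cat_path pt pq last_cat lq.
  have va' : visits_all x (t ++ q).
    by move=> v; have := vt v; rewrite /walk_seq !inE mem_cat => /orP [->|->]; rewrite ?orbT.
  move=> /(_ (conj erefl erefl) va').
  rewrite /len /walk_seq /= size_cat.
  move: hq; rewrite /=.
  have := pos x; case: #|T| bt => [|n] //= bt _ hq h. nia.
Qed.
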